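(* Let $n$ be an even positive integer, $p\ne 2$ a prime dividing $n$, and $p^a$ the largest power of $p$ dividing $n$. Suppose there is a prime $q$ with $n/3<q<n/2$ and $n-2q<p^a$. Then $n$ satisfies the 3-variation of Condition 1 with $p$, $q$ and any prime that divides $\binom{n}{n/2}$.
   Context: A positive integer $n$ satisfies the $N$-variation of Condition 1 with primes $p_1,\dots,p_N$ if these are $N$ different primes and for every $1\le k\le n-1$, $\binom{n}{k}$ is divisible by at least one of $p_1,\dots,p_N$. *)

(* Defs.v *)
From mathcomp Require Import all_boot.
Set Implicit Arguments. Unset Strict Implicit. Unset Printing Implicit Defensive.

Definition cond1_var (n : nat) (ps : seq nat) : Prop :=
  uniq ps /\ all prime ps /\
  forall k, 1 <= k <= n - 1 -> has (fun p => p %| 'C(n, k)) ps.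

(* Main.v *)
Require Import Defs.
From mathcomp Require Import all_boot.
From mathcomp Require Import zify.

Lemma lognfact_small q m : prime q -> m < q * q -> logn q m`! = m %/ q.
Proof.
move=> pq hm; rewrite logn_fact //.
case: m hm => [|m] hm; first by rewrite big_geq ?div0n.
rewrite big_ltn // expn1 big_nat_cond big1 ?addn0 //.
move=> k /andP[/andP[hk _] _].
apply: divn_small.
have q1 : 1 < q by apply: prime_gt1.
apply: (leq_trans hm).
have -> : k = 2 + (k - 2) by lia.
rewrite expnD -mulnn; apply: leq_pmulr; rewrite expn_gt0; lia.
Qed.

Lemma dvd_bin_pa p n k : prime p -> 0 < k -> k <= n -> ~~ (p ^ logn p n %| k) ->
  p %| 'C(n, k).
Proof.
move=> pp k0 kn hk; apply/negPn/negP => hC.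
apply: (negP hk).
have h1 : p ^ logn p n %| k * 'C(n, k).
  have e : k = (k.-1).+1 by lia.
  rewrite e -mul_bin_diag; apply: dvdn_mulr; exact: pfactor_dvdnn.
have cop : coprime (p ^ logn p n) 'C(n, k).
  by apply: coprimeXl; rewrite prime_coprime.
by rewrite -(Gauss_dvdl _ cop).
Qed.

Lemma div_eqc q m c : 0 < q -> c * q <= m < c.+1 * q -> m %/ q = c.
Proof.
move=> q0 /andP [h1 h2]; apply/eqP; rewrite eqn_leq -ltnS ltn_divLR // leq_divRL //.
by rewrite h1 h2.
Qed.

Theorem mainTheorem12 (n p q r : nat) :
  0 < n -> ~~ odd n ->
  prime p -> p != 2 -> p %| n ->
  prime q -> n < 3 * q -> 2 * q < n -> n - 2 * q < p ^ logn p n ->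
  prime r -> r %| 'C(n, n./2) -> r != p -> r != q ->
  cond1_var n [:: p; q; r].
Proof.
move=> n0 ev pp p2 pn pq n3q n2q hs pr rC rp rq.
have hn : n = (n./2).*2 by rewrite -[LHS](odd_double_half n) (negbTE ev).
have q3 : 3 <= q.
  have := prime_gt1 pq; move: hn n3q n2q; rewrite -!muln2; lia.
have pnq : p != q.
  apply/eqP => epq; move: pn; rewrite epq => /dvdnP [c hc].
  move: n3q n2q; rewrite hc !ltn_pmul2r ?prime_gt0 //; lia.
split.
  by rewrite /= !inE negb_or pnq; rewrite eq_sym rp eq_sym rq.
split; first by rewrite /= pp pq pr.
move=> k /andP [k1 kn].
have kn' : k < n by move: kn n0; clear; lia.
set d := p ^ logn p n in hs *.
have d0 : 0 < d by rewrite expn_gt0 prime_gt0.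
case hdk : (d %| k); last first.
  by rewrite /= dvd_bin_pa ?hdk // ltnW.
have hdnk : d %| n - k by rewrite dvdn_sub // pfactor_dvdnn.
have kd : d <= k by apply: dvdn_leq.
have nkd : d <= n - k by apply: dvdn_leq; rewrite // subn_gt0.
case: (eqVneq k n./2) => [-> | kh]; first by rewrite /= rC !orbT.
have hk3 : ~ (q <= k <= n - q).
  move=> hq; move: hdk hdnk => /dvdnP [u hu] /dvdnP [v hv].
  clear pn rC ev.
  have hd : n = n./2 * 2 by rewrite muln2.
  case: (ltngtP u v) => huv.
  - have : u.+1 * d <= v * d by rewrite leq_mul2r huv orbT.
    rewrite mulSn; lia.
  - have : v.+1 * d <= u * d by rewrite leq_mul2r huv orbT.
    rewrite mulSn; lia.
  - subst v; move/eqP: kh; move: hu hv hd; clear; lia.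
clear pn rC ev hdk hdnk.
have hk1 : n - 2 * q < k by lia.
have hk2 : k < 2 * q by lia.
have q0 : 0 < q by apply: prime_gt0.
have hqq : 3 * q <= q * q by rewrite leq_mul2r q3 orbT.
have hn2 : n %/ q = 2 by apply: div_eqc => //; lia.
have hsum : k %/ q + (n - k) %/ q = 1.
  have [kq | kq] := ltnP k q.
    rewrite (@div_eqc q k 0) // ?(@div_eqc q (n - k) 1) //; lia.
  rewrite (@div_eqc q k 1) // ?(@div_eqc q (n - k) 0) //; lia.
have Cg : 0 < 'C(n, k) by rewrite bin_gt0; lia.
have : q %| 'C(n, k).
  rewrite -[q]expn1 pfactor_dvdn //.
  have kln : k <= n by apply: ltnW.
  have := bin_fact kln; move=> /(congr1 (logn q)).
  rewrite !lognM ?fact_gt0 ?muln_gt0 ?fact_gt0 // !lognfact_small //.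
  - by rewrite hsum hn2; clear; lia.
  1-3: move: hqq n3q kn'; clear; lia.
by move=> h; rewrite /= h ?orbT.
Qed.
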